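(* The function $Q:Z_0\to\mathbb{R}$, $Q(z)=\lambda_{\max}(M(z))$, is convex.
   Context: Let $n\ge2$, $\mathcal S_0^{n\times n}$ the trace-free symmetric matrices, $Z:=\mathbb{R}\times\mathbb{R}^n\times\mathbb{R}^n\times\mathcal S_0^{n\times n}\times\mathbb{R}$ with elements $z=(\rho,v,m,\sigma,p)$, $Z_0:=\{z\in Z:\rho\in(-1,1)\}$ (a convex set). For $z\in Z_0$, $M(z):=\frac{v\otimes v-\rho(m\otimes v+v\otimes m)+m\otimes m}{1-\rho^2}-\sigma$ and $\lambda_{\max}$ denotes the maximal eigenvalue of a symmetric matrix. *)

(* Defs.v *)
From HB Require Import structures.
From mathcomp Require Import all_boot all_order all_algebra.
From mathcomp Require Import boolp classical_sets reals.
Set Implicit Arguments. Unset Strict Implicit. Unset Printing Implicit Defensive.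
Import Order.TTheory GRing.Theory Num.Theory.
Local Open Scope ring_scope.
Local Open Scope classical_set_scope.

(* Z = R x R^n x R^n x S_0^{nxn} x R ; points are tuples (rho, v, m, sigma, p),
   vectors in R^n are column vectors 'cV_n, sigma is an n x n matrix which
   is required (in Z0) to be symmetric and trace-free. *)
Definition Zpt (R : realType) (n : nat) : Type :=
  (R * 'cV[R]_n * 'cV[R]_n * 'M[R]_n * R)%type.

Definition zrho (R : realType) (n : nat) (z : Zpt R n) : R := z.1.1.1.1.
Definition zv (R : realType) (n : nat) (z : Zpt R n) : 'cV[R]_n := z.1.1.1.2.
Definition zm (R : realType) (n : nat) (z : Zpt R n) : 'cV[R]_n := z.1.1.2.
Definition zsigma (R : realType) (n : nat) (z : Zpt R n) : 'M[R]_n := z.1.2.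
Definition zp (R : realType) (n : nat) (z : Zpt R n) : R := z.2.

Definition inZ0 (R : realType) (n : nat) (z : Zpt R n) : Prop :=
  [/\ -1 < zrho z < 1, (zsigma z)^T = zsigma z & \tr (zsigma z) = 0].

Definition zcomb (R : realType) (n : nat) (t : R) (z1 z2 : Zpt R n) : Zpt R n :=
  (t * zrho z1 + (1 - t) * zrho z2,
   t *: zv z1 + (1 - t) *: zv z2,
   t *: zm z1 + (1 - t) *: zm z2,
   t *: zsigma z1 + (1 - t) *: zsigma z2,
   t * zp z1 + (1 - t) * zp z2).

Definition otimes (R : realType) (n : nat) (a b : 'cV[R]_n) : 'M[R]_n := a *m b^T.

Definition Mz (R : realType) (n : nat) (z : Zpt R n) : 'M[R]_n :=
  (1 - zrho z ^+ 2)^-1 *: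
    (otimes (zv z) (zv z)
     - zrho z *: (otimes (zm z) (zv z) + otimes (zv z) (zm z))
     + otimes (zm z) (zm z))
  - zsigma z.

Definition lambda_max (R : realType) (n : nat) (A : 'M[R]_n) : R := sup [set a : R | eigenvalue A a].

Definition Q (R : realType) (n : nat) (z : Zpt R n) : R := lambda_max (Mz z).

(* Main.v *)
Require Import Defs.
From HB Require Import structures.
From mathcomp Require Import all_boot all_order all_algebra.
From mathcomp Require Import boolp classical_sets reals.
From mathcomp.real_closed Require Import complex.
Import Order.TTheory GRing.Theory Num.Theory.
Local Open Scope ring_scope.

Definition qf {R : realType} {n} (x : 'rV[R]_n) (A : 'M[R]_n) : R := (x *m A *m x^T) 0 0.

Section Cx.
Variable R : realType.
Local Notation C := (R[i]).
Local Notation emb := (real_complex R).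

Lemma ReD (a b : C) : complex.Re (a + b) = complex.Re a + complex.Re b.
Proof. by case: a; case: b. Qed.
Lemma ImD (a b : C) : complex.Im (a + b) = complex.Im a + complex.Im b.
Proof. by case: a; case: b. Qed.
Lemma ReMr (a : C) (b : R) : complex.Re (a * emb b) = complex.Re a * b.
Proof. by case: a => x y /=; rewrite mulr0 subr0. Qed.
Lemma ImMr (a : C) (b : R) : complex.Im (a * emb b) = complex.Im a * b.
Proof. by case: a => x y /=; rewrite mulr0 add0r. Qed.
Lemma ReMl (a : C) (b : R) : complex.Re (emb b * a) = b * complex.Re a.
Proof. by case: a => x y /=; rewrite mul0r subr0. Qed.
Lemma ImMl (a : C) (b : R) : complex.Im (emb b * a) = b * complex.Im a.
Proof. by case: a => x y /=; rewrite mul0r addr0. Qed.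
Lemma Re_sum n (F : 'I_n -> C) : complex.Re (\sum_i F i) = \sum_i complex.Re (F i).
Proof. by apply: (big_morph _ ReD). Qed.
Lemma Im_sum n (F : 'I_n -> C) : complex.Im (\sum_i F i) = \sum_i complex.Im (F i).
Proof. by apply: (big_morph _ ImD). Qed.
Lemma emb_real (x : R) : emb x \is Num.real.
Proof. by rewrite complex_real. Qed.
End Cx.
Lemma embM (R : realType) (a b : R) : ((a*b)%:C : R[i])%C = ((a%:C)%C * (b%:C)%C).
Proof. exact: rmorphM. Qed.
Local Open Scope sesquilinear_scope.
Lemma spec (R : realType) n (A : 'M[R]_n.+1) : A^T = A ->
  exists r, eigenvalue A r /\ forall x, qf x A <= r * qf x 1%:M.
Proof.
move=> tA.
pose emb := real_complex R.
pose Ac := map_mx emb A.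
have Ah : Ac \is hermsymmx.
  apply: realsym_hermsym.
    apply/is_hermitianmxP; rewrite expr0 scale1r.
    by apply/matrixP => i j; rewrite !mxE /= -{1}tA mxE.
  by apply/mxOverP => i j; rewrite mxE emb_real.
have /orthomx_spectralP Aeq := hermitian_normalmx Ah.
have Pu := spectral_unitarymx Ac.
have Punit := spectral_unit Ac.
have dreal := hermitian_spectral_diag_real Ah.
move: Aeq; set P := spectralmx Ac; set d := spectral_diag Ac => Aeq.
rewrite invmx_unitary // in Aeq.
have PPt : P *m P^t* = 1%:M by apply/unitarymxP.
have PtP : P^t* *m P = 1%:M by rewrite -invmx_unitary // mulVmx.
pose F i := complex.Re (d 0 i).
have dF i : d 0 i = emb (F i).
  by rewrite /F /emb RRe_real //; move/mxOverP: dreal; apply.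
case: (@arg_maxP _ _ _ ord0 xpredT F isT) => i0 _ Hmax.
exists (F i0); split.
  pose v := row i0 P.
  have PA : P *m Ac = diag_mx d *m P by rewrite {1}Aeq !mulmxA PPt mul1mx.
  have vA : v *m Ac = d 0 i0 *: v.
    by rewrite -row_mul PA; apply/rowP => c; rewrite mul_diag_mx !mxE.
  have v0 : v != 0.
    apply/negP => /eqP v0.
    have : row i0 (P *m P^t*) = 0 by rewrite row_mul -/v v0 mul0mx.
    by rewrite PPt => /rowP /(_ i0); rewrite !mxE eqxx /= => /eqP; rewrite oner_eq0.
  pose vr := map_mx (@complex.Re R) v; pose vi := map_mx (@complex.Im R) v.
  have Hr : vr *m A = F i0 *: vr.
    apply/rowP => c; move/rowP: vA => /(_ c); rewrite !mxE dF => /(congr1 (@complex.Re R)).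
    by rewrite Re_sum ReMl => <-; apply: eq_bigr => j _; rewrite !mxE ReMr.
  have Hi : vi *m A = F i0 *: vi.
    apply/rowP => c; move/rowP: vA => /(_ c); rewrite !mxE dF => /(congr1 (@complex.Im R)).
    by rewrite Im_sum ImMl => <-; apply: eq_bigr => j _; rewrite !mxE ImMr.
  case: (eqVneq vr 0) => [vr0|vrn0].
    have vin0 : vi != 0.
      apply: contraNneq v0 => vi0; apply/eqP/rowP => c.
      move/rowP: vr0 => /(_ c); move/rowP: vi0 => /(_ c); rewrite !mxE.
      by case: (P i0 c) => a b /= -> ->.
    by apply/eigenvalueP; exists vi.
  by apply/eigenvalueP; exists vr.
move=> x.
pose xc := map_mx emb x.
have E1 (M : 'M[R]_1) : emb (M 0 0) = (map_mx emb M) 0 0 by rewrite mxE.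
have xcT : xc^t* = xc^T.
  by apply/matrixP => i j; rewrite !mxE conj_Creal // emb_real.
rewrite -lecR embM /qf mulmx1 -/emb !E1 !map_mxM -!map_trmx -/xc -xcT -/Ac Aeq.
pose y := xc *m P^t*.
have Hy : P *m xc^t* = y^t* by rewrite /y trmx_mul map_mxM trmxCK.
have -> : xc *m (P^t* *m diag_mx d *m P) *m xc^t* = y *m diag_mx d *m y^t*.
  by rewrite -Hy /y !mulmxA.
have -> : xc *m xc^t* = y *m y^t*.
  by rewrite -Hy /y mulmxA -(mulmxA xc) PtP mulmx1.
rewrite mul_mx_diag !mxE mulr_sumr; apply: ler_sum => j _.
rewrite !mxE dF -mulrA [emb (F j) * _]mulrC mulrA [emb (F i0) * _]mulrC -!mulrA.
set s := (\sum_(j0 < _) _).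
rewrite [s^* * _]mulrC !(mulrCA s).
apply: ler_wpM2r; first exact: mul_conjC_ge0.
by rewrite lecR; apply: Hmax.
Qed.
Local Close Scope sesquilinear_scope.

Lemma qf_gt0 (R : realType) n (u : 'rV[R]_n) : u != 0 -> 0 < qf u 1%:M.
Proof.
move=> u0; rewrite /qf mulmx1 mxE.
have E : \sum_j u 0 j * u^T j 0 = \sum_j u 0 j ^+ 2.
  by apply: eq_bigr => j _; rewrite mxE expr2.
rewrite E lt_def sumr_ge0 ?andbT; last by move=> j _; exact: sqr_ge0.
apply: contra u0 => /eqP s0; apply/eqP/rowP => j.
have := @psumr_eq0P _ _ _ _ (fun i _ => sqr_ge0 (u 0 i)) s0 j isT.
by rewrite !mxE => /eqP; rewrite sqrf_eq0 => /eqP.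
Qed.

Lemma qf_eig (R : realType) n (A : 'M[R]_n) (u : 'rV[R]_n) a :
  u *m A = a *: u -> qf u A = a * qf u 1%:M.
Proof. by move=> h; rewrite /qf h mulmx1 -scalemxAl mxE. Qed.

Lemma lmax_eq (R : realType) n (A : 'M[R]_n.+1) : A^T = A ->
  exists r, lambda_max A = r /\ eigenvalue A r /\ forall x, qf x A <= r * qf x 1%:M.
Proof.
move=> tA; have [r [er Hr]] := @spec R n A tA.
have ub : ubound [set a : R | eigenvalue A a] r.
  move=> a /= /eigenvalueP [u uA u0].
  have := Hr u; rewrite (@qf_eig R _ A u a uA) ler_pM2r //; exact: (@qf_gt0 R _ u).
exists r; split => //; apply/eqP; rewrite eq_le; apply/andP; split.
  by apply: ge_sup => //; exists r.
apply: sup_upper_bound => //; split; [by exists r | by exists r].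
Qed.
From mathcomp Require Import ring lra.

Lemma persp {R : realType} (u1 u2 s1 s2 t : R) : 0 < s1 -> 0 < s2 -> 0 <= t <= 1 ->
  (t * u1 + (1 - t) * u2) ^+ 2 / (t * s1 + (1 - t) * s2)
  <= t * (u1 ^+ 2 / s1) + (1 - t) * (u2 ^+ 2 / s2).
Proof.
move=> s1p s2p /andP[t0 t1].
have sp : 0 < t * s1 + (1 - t) * s2 by nra.
rewrite -subr_ge0.
have -> : t * (u1 ^+ 2 / s1) + (1 - t) * (u2 ^+ 2 / s2) -
   (t * u1 + (1 - t) * u2) ^+ 2 / (t * s1 + (1 - t) * s2) =
   t * (1 - t) * (u1 * s2 - u2 * s1) ^+ 2 / (s1 * s2 * (t * s1 + (1 - t) * s2)).
  by field; rewrite ?gt_eqF ?mulr_gt0.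
apply: divr_ge0; last by rewrite ltW // !mulr_gt0.
apply: mulr_ge0; last exact: sqr_ge0.
by apply: mulr_ge0; rewrite // subr_ge0.
Qed.

Lemma conv_lt {R : realType} (a b c t : R) : a < b -> a < c -> 0 <= t <= 1 ->
  a < t * b + (1 - t) * c.
Proof.
move=> hb hc /andP[t0 t1]; case: (ltrP 0 t) => tp.
  by nra.
have -> : t = 0 by apply/eqP; rewrite eq_le tp t0.
by rewrite mul0r add0r subr0 mul1r.
Qed.

Lemma conv_gt {R : realType} (a b c t : R) : b < a -> c < a -> 0 <= t <= 1 ->
  t * b + (1 - t) * c < a.
Proof.
move=> hb hc ht; rewrite -ltrN2.
have := @conv_lt R (- a) (- b) (- c) t; rewrite !ltrN2 => /(_ hb hc ht).
move=> h; lra.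
Qed.

Definition Gf {R : realType} (rho a b : R) : R :=
  (1 - rho ^+ 2)^-1 * (a * a - rho * (b * a + a * b) + b * b).

Lemma Gf_split (R : realType) (rho a b : R) : -1 < rho < 1 ->
  Gf rho a b = (a + b) ^+ 2 / (2 * (1 + rho)) + (a - b) ^+ 2 / (2 * (1 - rho)).
Proof.
move=> /andP[h1 h2]; rewrite /Gf.
have n1 : 1 + rho != 0 by rewrite gt_eqF // -ltrBlDl sub0r.
have n2 : 1 - rho != 0 by rewrite gt_eqF // subr_gt0.
have n3 : 1 - rho ^+ 2 != 0.
  by rewrite (_ : 1 - rho ^+ 2 = (1 + rho) * (1 - rho)); [rewrite mulf_neq0 | ring].
by field; rewrite n1 n2 n3.
Qed.

Lemma Gf_conv (R : realType) (r1 r2 a1 a2 b1 b2 t : R) :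
  -1 < r1 < 1 -> -1 < r2 < 1 -> 0 <= t <= 1 ->
  Gf (t * r1 + (1 - t) * r2) (t * a1 + (1 - t) * a2) (t * b1 + (1 - t) * b2)
  <= t * Gf r1 a1 b1 + (1 - t) * Gf r2 a2 b2.
Proof.
move=> /andP[h1 h2] /andP[h3 h4] /andP[t0 t1].
have hc : -1 < t * r1 + (1 - t) * r2 < 1.
  by apply/andP; split; [apply: conv_lt | apply: conv_gt]; rewrite ?h1 ?h2 ?h3 ?h4 //; apply/andP.
rewrite !Gf_split //; try by apply/andP.
have e1 : t * a1 + (1 - t) * a2 + (t * b1 + (1 - t) * b2) = t * (a1 + b1) + (1 - t) * (a2 + b2) by ring.
have e2 : t * a1 + (1 - t) * a2 - (t * b1 + (1 - t) * b2) = t * (a1 - b1) + (1 - t) * (a2 - b2) by ring.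
have e3 : 2 * (1 + (t * r1 + (1 - t) * r2)) = t * (2 * (1 + r1)) + (1 - t) * (2 * (1 + r2)) by ring.
have e4 : 2 * (1 - (t * r1 + (1 - t) * r2)) = t * (2 * (1 - r1)) + (1 - t) * (2 * (1 - r2)) by ring.
rewrite e1 e2 e3 e4.
have p1 : 0 < 2 * (1 + r1) by rewrite mulr_gt0 // -ltrBlDl sub0r.
have p2 : 0 < 2 * (1 + r2) by rewrite mulr_gt0 // -ltrBlDl sub0r.
have p3 : 0 < 2 * (1 - r1) by rewrite mulr_gt0 // subr_gt0.
have p4 : 0 < 2 * (1 - r2) by rewrite mulr_gt0 // subr_gt0.
have tt : 0 <= t <= 1 by apply/andP.
have := persp (a1 + b1) (a2 + b2) _ _ _ p1 p2 tt.
have := persp (a1 - b1) (a2 - b2) _ _ _ p3 p4 tt.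
move=> q1 q2; apply: (le_trans (lerD q2 q1)).
by rewrite le_eqVlt; apply/orP; left; apply/eqP; ring.
Qed.

Section QF.
Variable (R : realType) (n : nat) (x : 'rV[R]_n).
Lemma qfD (A B : 'M[R]_n) : qf x (A + B) = qf x A + qf x B.
Proof. by rewrite /qf mulmxDr mulmxDl mxE. Qed.
Lemma qfN (A : 'M[R]_n) : qf x (- A) = - qf x A.
Proof. by rewrite /qf mulmxN mulNmx mxE. Qed.
Lemma qfB (A B : 'M[R]_n) : qf x (A - B) = qf x A - qf x B.
Proof. by rewrite qfD qfN. Qed.
Lemma qfZ c (A : 'M[R]_n) : qf x (c *: A) = c * qf x A.
Proof. by rewrite /qf -scalemxAr -scalemxAl mxE. Qed.
Lemma qf_otimes (a b : 'cV[R]_n) :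
  qf x (otimes a b) = (x *m a) 0 0 * (x *m b) 0 0.
Proof.
rewrite /qf /otimes mulmxA -mulmxA -trmx_mul mxE big_ord1 mxE.
by rewrite [_^T _ _]mxE.
Qed.
Lemma qfMz (z : Zpt R n) :
  qf x (Mz z) = Gf (zrho z) ((x *m zv z) 0 0) ((x *m zm z) 0 0) - qf x (zsigma z).
Proof. by rewrite /Mz qfB qfZ qfD qfB qfZ qfD !qf_otimes. Qed.
Lemma lin_comb (t : R) (a b : 'cV[R]_n) :
  (x *m (t *: a + (1 - t) *: b)) 0 0 = t * (x *m a) 0 0 + (1 - t) * (x *m b) 0 0.
Proof. by rewrite mulmxDr -!scalemxAr mxE !mxE. Qed.
End QF.

Lemma otimesT (R : realType) n (a b : 'cV[R]_n) : (otimes a b)^T = otimes b a.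
Proof. by rewrite /otimes trmx_mul trmxK. Qed.

Lemma MzT (R : realType) n (z : Zpt R n) : (zsigma z)^T = zsigma z -> (Mz z)^T = Mz z.
Proof.
move=> hs; rewrite /Mz !(linearB, linearD, linearZ) /= !(linearB, linearD, linearZ) /= !otimesT hs.
by congr (_ + _ + _ - _); congr (_ *: _); exact: addrC.
Qed.

Theorem lemma3p7 (R : realType) (n : nat) (hn : (2 <= n)%N)
  (z1 z2 : Zpt R n) (t : R) :
  inZ0 z1 -> inZ0 z2 -> 0 <= t <= 1 ->
  Q (zcomb t z1 z2) <= t * Q z1 + (1 - t) * Q z2.
Proof.
case: n hn z1 z2 => [//|n] hn z1 z2 [r1 s1 _] [r2 s2 _] ht.
have /andP[t0 t1] := ht.
have t1' : 0 <= 1 - t by rewrite subr_ge0.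
set zc := zcomb t z1 z2.
have sc : (zsigma zc)^T = zsigma zc.
  by rewrite /= linearD !linearZ /= s1 s2.
have [q1 [e1 [_ H1]]] := @lmax_eq R n _ (@MzT R _ z1 s1).
have [q2 [e2 [_ H2]]] := @lmax_eq R n _ (@MzT R _ z2 s2).
have [qc [ec [evc _]]] := @lmax_eq R n _ (@MzT R _ zc sc).
rewrite /Q e1 e2 ec.
case/eigenvalueP: evc => u uA u0.
have N0 := @qf_gt0 R _ u u0.
have Eq := @qf_eig R _ _ u qc uA.
rewrite -(ler_pM2r N0) mulrDl -Eq -!mulrA.
apply: (le_trans _ (lerD (ler_wpM2l t0 (H1 u)) (ler_wpM2l t1' (H2 u)))).
rewrite !qfMz /= !lin_comb qfD !qfZ.
have := @Gf_conv R (zrho z1) (zrho z2) ((u *m zv z1) 0 0) ((u *m zv z2) 0 0) ((u *m zm z1) 0 0) ((u *m zm z2) 0 0) t r1 r2 ht.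
move=> h; lra.
Qed.
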